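(* For every integer $p\ge0$, $$\sum_{k=1}^\infty\frac{(-1)^k}{(2k-1)(2k)^p(2k+1)}=\begin{cases}\dfrac12-\dfrac{\pi}{4}+\displaystyle\sum_{j=1}^{p/2}2^{-2j}\eta(2j), & p\text{ even},\\[8pt] -\dfrac12+\dfrac{\ln 2}{2}+\displaystyle\sum_{j=1}^{(p-1)/2}2^{-(2j+1)}\eta(2j+1), & p\text{ odd},\end{cases}$$ where empty sums are $0$.
   Context: $\eta(s)=\sum_{k\ge1}(-1)^{k+1}k^{-s}$ ($\operatorname{Re}s>0$) is the Dirichlet eta function. *)

(* Defs.v *)
From Stdlib Require Import Reals List.
From Coquelicot Require Import Coquelicot.
Open Scope R_scope.

(* Dirichlet eta function for real s > 0:
   eta s = sum_{k>=1} (-1)^(k+1) k^(-s), the series taken as the limit of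
   its partial sums (Coquelicot's Series = Lim_seq of partial sums).
   Index shift: n = k - 1. *)
Definition eta (s : R) : R :=
  Series (fun n : nat => (-1) ^ n * Rpower (INR (n + 1)) (- s)).

Definition sum_1_to (m : nat) (f : nat -> R) : R :=
  fold_right Rplus 0 (map f (seq 1 m)).

(* Main.v *)
Require Import Defs.
From Stdlib Require Import Reals List Lia Lra ZArith.
From Coquelicot Require Import Coquelicot.
Open Scope R_scope.

Lemma ln_lt_lin (y : R) : 0 < y -> y <> 1 -> ln y < y - 1.
Proof.
  intros Hy H1.
  assert (H := exp_ineq1 (y - 1) ltac:(lra)).
  rewrite <- (ln_exp (y - 1)). apply ln_increasing; lra.
Qed.

Lemma ln_step (x : R) : 0 < x ->
  / (x + 1) <= ln (x + 1) - ln x <= / x.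
Proof.
  intros Hx. split.
  - assert (Hq : 0 < x / (x + 1)) by (apply Rdiv_lt_0_compat; lra).
    assert (H := ln_lt_lin (x / (x+1)) Hq).
    rewrite ln_div in H by lra.
    assert (x / (x+1) - 1 = - / (x+1)) by (field; lra).
    assert (x / (x + 1) <> 1).
    { intro E. apply (f_equal (fun t => t * (x+1))) in E.
      unfold Rdiv in E. rewrite Rmult_assoc, Rinv_l in E by lra. lra. }
    specialize (H H1). lra.
  - assert (Hq : 0 < (x + 1) / x) by (apply Rdiv_lt_0_compat; lra).
    assert ((x + 1) / x <> 1).
    { intro E. apply (f_equal (fun t => t * x)) in E.
      unfold Rdiv in E. rewrite Rmult_assoc, Rinv_l in E by lra. lra. }
    assert (H2 := ln_lt_lin _ Hq H). clear H. rename H2 into H.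
    rewrite ln_div in H by lra.
    assert ((x + 1) / x - 1 = / x) by (field; lra). lra.
Qed.

Fixpoint Harm (n : nat) : R := match n with O => 0 | S m => Harm m + / INR (S m) end.

Lemma H_ln (N j : nat) : (1 <= N)%nat ->
  Harm (N + j) - Harm N <= ln (INR (N + j)) - ln (INR N)
  <= Harm (N + j) - Harm N + / INR N - / INR (N + j).
Proof.
  intros HN. induction j as [|j IH].
  - rewrite Nat.add_0_r. lra.
  - replace (N + S j)%nat with (S (N + j)) by lia. cbn [Harm].
    assert (Hp : 0 < INR (N + j)) by (apply lt_0_INR; lia).
    assert (Hs := ln_step (INR (N + j)) Hp).
    rewrite S_INR. lra.
Qed.

Fixpoint Alt (N : nat) : R :=
  match N with O => 0 | S M => Alt M + / INR (2 * M + 1) - / INR (2 * M + 2) end.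

Lemma Alt_H (N : nat) : Alt N = Harm (2 * N) - Harm N.
Proof.
  induction N as [|N IH]; [simpl; lra|].
  replace (2 * S N)%nat with (S (S (2 * N))) by lia.
  simpl Alt. cbn [Harm]. rewrite IH.
  replace (S (2 * N)) with (2 * N + 1)%nat by lia.
  replace (S (2 * N + 1)) with (2 * N + 2)%nat by lia.
  rewrite !plus_INR, !mult_INR, !S_INR. simpl INR.
  assert (0 <= INR N) by apply pos_INR.
  field. lra.
Qed.

Lemma Alt_bounds (N : nat) : (1 <= N)%nat -> Alt N <= ln 2 <= Alt N + / INR N.
Proof.
  intros HN. rewrite Alt_H.
  assert (E := H_ln N N HN).
  replace (N + N)%nat with (2 * N)%nat in E by lia.
  assert (Hp : 0 < INR N) by (apply lt_0_INR; lia).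
  rewrite mult_INR, ln_mult in E by (simpl; lra).
  replace (INR 2) with 2 in E by (simpl; lra).
  assert (0 < / (2 * INR N)) by (apply Rinv_0_lt_compat; lra).
  lra.
Qed.

Definition U1 (n : nat) : R := / INR (n + 1).
Definition Uq (q : nat) (n : nat) : R := / INR (n + 1) ^ q.

Lemma Uq_dec (q : nat) : Un_decreasing (Uq q).
Proof.
  intro n. unfold Uq. apply Rinv_le_contravar.
  - apply pow_lt, lt_0_INR; lia.
  - apply pow_incr. split; [apply pos_INR|]. apply le_INR; lia.
Qed.

Lemma Uq_cv (q : nat) : (1 <= q)%nat -> Un_cv (Uq q) 0.
Proof.
  intros Hq eps He.
  destruct (archimed (/ eps)) as [A _].
  exists (Z.to_nat (up (/ eps))). intros n Hn.
  unfold Rdist, Uq.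
  assert (Hn1 : 1 <= INR (n + 1)) by (rewrite plus_INR; simpl; assert (0 <= INR n) by apply pos_INR; lra).
  assert (Hpow : INR (n + 1) <= INR (n + 1) ^ q).
  { destruct q; [lia|]. simpl. rewrite <- (Rmult_1_r (INR (n+1))) at 1.
    apply Rmult_le_compat_l; [lra|]. apply pow_R1_Rle. lra. }
  assert (Hbig : / eps < INR (n + 1)).
  { apply Rlt_le_trans with (IZR (up (/ eps))); [lra|].
    destruct (Z.le_gt_cases 0 (up (/ eps))) as [Hz|Hz].
    - rewrite <- (Z2Nat.id (up (/eps))) by lia. rewrite <- INR_IZR_INZ.
      apply le_INR. lia.
    - apply IZR_lt in Hz. assert (0 <= INR (n+1)) by apply pos_INR. lra. }
  rewrite Rminus_0_r, Rabs_pos_eq.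
  - rewrite <- (Rinv_inv eps). apply Rinv_lt_contravar.
    + apply Rmult_lt_0_compat; [apply Rinv_0_lt_compat; lra| lra].
    + lra.
  - left. apply Rinv_0_lt_compat. lra.
Qed.

Lemma series_of_cv (a : nat -> R) (l : R) :
  Un_cv (fun N => sum_f_R0 a N) l -> is_series a l.
Proof. intro Hc. apply is_series_Reals. exact Hc. Qed.

Lemma small_zero (x : R) : (forall N, Rabs x <= / INR (N + 1)) -> x = 0.
Proof.
  intros Hx. destruct (Req_dec x 0) as [|Hne]; [assumption|].
  assert (Ha : 0 < Rabs x) by (apply Rabs_pos_lt; exact Hne).
  destruct (Uq_cv 1 (le_n 1) (Rabs x / 2) ltac:(lra)) as [N HN].
  specialize (HN N (le_n N)). specialize (Hx N).
  unfold Rdist, Uq in HN. rewrite pow_1, Rminus_0_r, Rabs_pos_eq in HN.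
  - lra.
  - left; apply Rinv_0_lt_compat, lt_0_INR; lia.
Qed.

Lemma sum_alt (N : nat) : sum_f_R0 (tg_alt (Uq 1)) (S (2 * N)) = Alt (S N).
Proof.
  induction N as [|N IH].
  - simpl. unfold tg_alt, Uq. simpl. field.
  - replace (S (2 * S N)) with (S (S (S (2 * N)))) by lia.
    rewrite tech5, tech5, IH. cbn [Alt]. cbn [Alt] in IH.
    unfold tg_alt, Uq.
    replace (S (S (2 * N))) with (2 * (S N))%nat by lia.
    rewrite pow_1_even, pow_1_odd.
    rewrite !pow_1. repeat rewrite ?S_INR, ?plus_INR, ?mult_INR, ?INR_0.
    assert (0 <= INR N) by apply pos_INR.
    field. lra.
Qed.

Lemma ln2_series : is_series (fun n => (-1) ^ n / INR (n + 1)) (ln 2).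
Proof.
  destruct (alternated_series (Uq 1) (Uq_dec 1) (Uq_cv 1 (le_n 1))) as [l Hl].
  assert (Hl2 : l = ln 2).
  { assert (l - ln 2 = 0); [|lra]. apply small_zero. intro N.
    destruct (alternated_series_ineq (Uq 1) l N (Uq_dec 1) (Uq_cv 1 (le_n 1)) Hl) as [A B].
    rewrite sum_alt in A.
    assert (E : sum_f_R0 (tg_alt (Uq 1)) (S (2 * N)) = sum_f_R0 (tg_alt (Uq 1)) (2 * N) - / INR (2 * N + 2)).
    { rewrite tech5. unfold tg_alt at 2, Uq. rewrite pow_1_odd, pow_1.
      replace (S (2 * N) + 1)%nat with (2 * N + 2)%nat by lia. field.
      apply not_0_INR. lia. }
    rewrite sum_alt in E.
    destruct (Alt_bounds (S N) ltac:(lia)) as [C D].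
    replace (S N) with (N + 1)%nat in * by lia.
    assert (/ INR (2 * N + 2) <= / INR (N + 1)).
    { apply Rinv_le_contravar. apply lt_0_INR; lia. apply le_INR; lia. }
    apply Rabs_le. lra. }
  subst l. apply series_of_cv.
  eapply Un_cv_ext; [|exact Hl]. intro n. apply sum_eq. intros i _.
  unfold tg_alt, Uq. rewrite pow_1. reflexivity.
Qed.

Lemma pi_series : is_series (fun n => (-1) ^ n / INR (2 * n + 1)) (PI / 4).
Proof.
  pose proof Alt_PI_eq as E. unfold Alt_PI in E. revert E.
  destruct exist_PI as [a Ha]. intro E.
  replace (PI / 4) with a by lra. apply series_of_cv. exact Ha.
Qed.

Lemma eta_series (q : nat) : (1 <= q)%nat ->
  is_series (fun n => (-1) ^ n * Rpower (INR (n + 1)) (- INR q)) (eta (INR q)).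
Proof.
  intros Hq. unfold eta. apply Series_correct.
  destruct (alternated_series (Uq q) (Uq_dec q) (Uq_cv q Hq)) as [l Hl].
  exists l. apply series_of_cv.
  eapply Un_cv_ext; [|exact Hl]. intro n. apply sum_eq. intros i _.
  unfold tg_alt, Uq. rewrite Rpower_Ropp, Rpower_pow. reflexivity.
  apply lt_0_INR; lia.
Qed.

Definition term (p : nat) (n : nat) : R :=
  let k := INR (n + 1) in
  (-1) ^ (n + 1) / ((2 * k - 1) * (2 * k) ^ p * (2 * k + 1)).

Lemma lin2 (a b f : nat -> R) (la lb c d L : R) :
  is_series a la -> is_series b lb ->
  (forall n, f n = c * a n + d * b n) -> L = c * la + d * lb -> is_series f L.
Proof.
  intros Ha Hb Hf HL. subst L.
  eapply is_series_ext; [intro n; symmetry; apply Hf|].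
  apply (is_series_plus (fun n => c * a n) (fun n => d * b n)).
  - apply (is_series_scal c a la Ha).
  - apply (is_series_scal d b lb Hb).
Qed.

Lemma b_shift : is_series (fun n => (-1) ^ (S n) / INR (2 * S n + 1)) (PI / 4 - 1).
Proof.
  apply (is_series_incr_1 (fun n => (-1) ^ n / INR (2 * n + 1))).
  match goal with |- is_series _ ?v => replace v with (PI / 4) end.
  - exact pi_series.
  - unfold plus; simpl. field.
Qed.

Ltac inr_norm := repeat rewrite ?S_INR, ?plus_INR, ?mult_INR, ?INR_0.

Lemma term0 : is_series (term 0) (1 / 2 - PI / 4).
Proof.
  apply (lin2 _ _ _ _ _ (-1/2) (-1/2) _ pi_series b_shift).
  - intro n. unfold term. rewrite pow_add. simpl pow. inr_norm.
    assert (0 <= INR n) by apply pos_INR.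
    field. lra.
  - lra.
Qed.

Lemma term1 : is_series (term 1) (- (1 / 2) + ln 2 / 2).
Proof.
  apply (lin2 _ _ _ _ _ 1 (1/2) _ (lin2 _ _ _ _ _ (-1/2) (1/2) _ pi_series b_shift (fun _ => eq_refl) eq_refl) ln2_series).
  - intro n. unfold term. rewrite pow_add. simpl pow. inr_norm.
    assert (0 <= INR n) by apply pos_INR.
    field. lra.
  - lra.
Qed.

Lemma term_rec (p : nat) (L : R) : is_series (term p) L ->
  is_series (term (p + 2)) (L + / 2 ^ (p + 2) * eta (INR (p + 2))).
Proof.
  intros Hp.
  apply (lin2 _ _ _ _ _ 1 (/ 2 ^ (p + 2)) _ Hp (eta_series (p + 2) ltac:(lia))).
  - intro n. unfold term.
    assert (Hk : 0 < INR (n + 1)) by (apply lt_0_INR; lia).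
    rewrite Rpower_Ropp, Rpower_pow by exact Hk.
    rewrite !pow_add, !Rpow_mult_distr. simpl pow.
    assert (HA : INR (n + 1) ^ p <> 0) by (apply pow_nonzero; lra).
    assert (Hk1 : 1 <= INR (n + 1)) by (rewrite plus_INR; simpl; pose proof (pos_INR n); lra).
    assert (HB : 2 ^ p <> 0) by (apply pow_nonzero; lra).
    set (A := INR (n + 1) ^ p) in *.
    set (B := 2 ^ p) in *.
    set (k := INR (n + 1)) in *.
    set (s := (-1) ^ n).
    field. repeat split; try lra.
  - lra.
Qed.

Lemma fold_plus_acc (l : list R) (a : R) :
  fold_right Rplus a l = fold_right Rplus 0 l + a.
Proof. induction l as [|x l IH]; simpl; [lra|]. rewrite IH. lra. Qed.

Lemma sum_1_to_S (m : nat) (f : nat -> R) :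
  sum_1_to (S m) f = sum_1_to m f + f (S m).
Proof.
  unfold sum_1_to. rewrite seq_S, map_app, fold_right_app. simpl.
  rewrite fold_plus_acc. replace (1 + m)%nat with (S m) by lia. lra.
Qed.

Lemma main_even (m : nat) :
  is_series (term (2 * m))
    (1 / 2 - PI / 4 + sum_1_to m (fun j => / 2 ^ (2 * j) * eta (INR (2 * j)))).
Proof.
  induction m as [|m IH].
  - unfold sum_1_to. simpl. rewrite Rplus_0_r. exact term0.
  - replace (2 * S m)%nat with (2 * m + 2)%nat by lia.
    rewrite sum_1_to_S.
    replace (2 * S m)%nat with (2 * m + 2)%nat by lia.
    rewrite <- Rplus_assoc. apply term_rec. exact IH.
Qed.

Lemma main_odd (m : nat) :
  is_series (term (2 * m + 1))
    (- (1 / 2) + ln 2 / 2 + sum_1_to m (fun j => / 2 ^ (2 * j + 1) * eta (INR (2 * j + 1)))).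
Proof.
  induction m as [|m IH].
  - unfold sum_1_to. simpl. rewrite Rplus_0_r. exact term1.
  - replace (2 * S m + 1)%nat with (2 * m + 1 + 2)%nat by lia.
    rewrite sum_1_to_S.
    replace (2 * S m + 1)%nat with (2 * m + 1 + 2)%nat by lia.
    rewrite <- Rplus_assoc. apply term_rec. exact IH.
Qed.

Theorem corollary3 (p : nat) :
  is_series
    (fun n : nat =>
       let k := INR (n + 1) in
       (-1) ^ (n + 1) / ((2 * k - 1) * (2 * k) ^ p * (2 * k + 1)))
    (if Nat.even p then
       1 / 2 - PI / 4
       + sum_1_to (p / 2) (fun j => / 2 ^ (2 * j) * eta (INR (2 * j)))
     else
       - (1 / 2) + ln 2 / 2
       + sum_1_to ((p - 1) / 2) (fun j => / 2 ^ (2 * j + 1) * eta (INR (2 * j + 1)))).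
Proof.
  change (fun n : nat => let k := INR (n + 1) in
       (-1) ^ (n + 1) / ((2 * k - 1) * (2 * k) ^ p * (2 * k + 1))) with (term p).
  destruct (Nat.Even_or_Odd p) as [[m Hm]|[m Hm]]; subst p.
  - rewrite Nat.even_mul. simpl Nat.even.
    replace (2 * m / 2)%nat with m by (rewrite Nat.mul_comm, Nat.div_mul; lia).
    apply main_even.
  - replace (Nat.even (2 * m + 1)) with false.
    + replace ((2 * m + 1 - 1) / 2)%nat with m.
      * apply main_odd.
      * replace (2 * m + 1 - 1)%nat with (m * 2)%nat by lia. rewrite Nat.div_mul; lia.
    + rewrite Nat.even_add, Nat.even_mul. reflexivity.
Qed.
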